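(* Let $q=p^s$ with $p$ prime, $R_T=\mathbb{F}_q[T]$, $P\in R_T$ monic irreducible of degree $d$. For $m\ge1$ and $\beta\in\mathbb{N}$ let $v_m(\beta)$ be the number of distinct cyclic subgroups of order $p^m$ of $(R_T/(P^{\beta}))^{\ast}$. Let $n\geq 2$, $\alpha\in\mathbb{N}$ and $\delta=\left[\frac{\alpha-1}{p}\right]+1$. Then \[ v_n(\alpha)=\frac{q^{d\left(\alpha-\lceil\alpha/p\rceil\right)}}{p}\,v_{n-1}(\delta). \]
   Context: $[x]$ denotes the floor and $\lceil x\rceil$ the ceiling of a real number $x$. *)

(* Defs.v *)
From HB Require Import structures.
From mathcomp Require Import all_boot all_order all_algebra all_fingroup all_solvable all_field.
Set Implicit Arguments. Unset Strict Implicit. Unset Printing Implicit Defensive.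
Import GRing.Theory.
Local Open Scope ring_scope.

(* The ring R_T/(Q) for Q : {poly F} is mathcomp's {poly %/ Q} (qpoly.v);
   its unit group (R_T/(Q))^* is the finite group {unit {poly %/ Q}}. *)

(* v_m(beta) : number of distinct cyclic subgroups of order p^m of
   (F[T]/(P^beta))^*.  Every cyclic subgroup is <[u]> for some unit u,
   and |<[u]>| = #[u]. *)
Definition ncyc_subgroups (F : finFieldType) (P : {poly F}) (p m beta : nat) : nat :=
  #|[set (<[u]>)%g | u in [set u : {unit {poly %/ P ^+ beta}} | #[u]%g == (p ^ m)%N]]|.

(* Main.v *)
Require Import Defs.
From HB Require Import structures.
From mathcomp Require Import all_boot all_order all_algebra all_fingroup all_solvable all_field.
Import GRing.Theory.
From mathcomp Require Import zify.
Import FinRing.Theory.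
Local Open Scope group_scope.

Lemma ncyc_card (gT : finGroupType) (N : nat) :
  #|[set x : gT | #[x] == N]| =
  (#|[set <[x]> | x in [set x : gT | #[x] == N]]| * totient N)%N.
Proof.
rewrite -sum1_card (partition_big_imset cycle) /= -sum_nat_const.
apply: eq_bigr => C /imsetP [x]; rewrite inE => /eqP oxN ->.
rewrite sum1dep_card -oxN totient_gen; apply: eq_card => y.
rewrite !inE /generator [X in _ = X]eq_sym.
have [e|ne] := eqVneq <[y]> <[x]>; last by rewrite andbF.
by rewrite /order e !eqxx.
Qed.

Lemma count_pow (gT hT : finGroupType) (p n : nat) (iota : hT -> gT) :
  prime p -> (1 < n)%N -> (forall x y : gT, commute x y) ->
  {morph iota : x y / x * y} -> injective iota ->
  (forall g : gT, exists h, iota h = g ^+ p) ->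
  (forall h, exists g, iota h = g ^+ p) ->
  #|[set g : gT | #[g] == (p ^ n)%N]| =
  (#|[set g : gT | g ^+ p == 1%g]| * #|[set h : hT | #[h] == (p ^ n.-1)%N]|)%N.
Proof.
move=> pr n1 comm morph inj surj1 surj2.
have i1 : iota 1 = 1.
  by apply: (mulIg (iota 1)); rewrite -morph !mul1g.
have iX k x : iota (x ^+ k) = iota x ^+ k.
  by elim: k => [|k IH]; rewrite ?expg0 // !expgS morph IH.
have ord_i x : #[iota x] = #[x].
  apply/eqP; rewrite eqn_dvd !order_dvdn -iX expg_order ?i1 // eqxx /=.
  by apply/eqP/inj; rewrite iX expg_order i1.
have p1 : (1 < p)%N by apply: prime_gt1.
have key g : (#[g] == p ^ n)%N = (#[g ^+ p] == p ^ n.-1)%N.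
  rewrite orderXgcd.
  case: n n1 => [|[|n']] // _ /=.
  have [dp|ndp] := boolP (p %| #[g]).
    rewrite (eqP (_ : gcdn #[g] p == p)); last by rewrite gcdnC; apply/eqP/gcdn_idPl.
    apply/eqP/eqP => [->|h]; first by rewrite expnS mulKn // ltnW.
    by rewrite -(divnK dp) h -expnSr.
  have cop : coprime #[g] p.
    by rewrite coprime_sym prime_coprime.
  rewrite (eqP cop) divn1.
  apply/eqP/eqP => h; move: ndp; rewrite h ?expnS ?dvdn_mulr //.

have -> : #|[set g : gT | #[g] == (p ^ n)%N]| = (
   \sum_(g : gT) \sum_(h in [set h : hT | #[h] == (p ^ n.-1)%N]) (iota h == g ^+ p))%N.
  rewrite -sum1_card big_mkcond; apply: eq_bigr => g _.
  rewrite inE key.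
  have [h hE] := surj1 g.
  have [e|ne] := eqVneq #[g ^+ p] (p ^ n.-1)%N.
    rewrite (bigD1 h) /=; last by rewrite inE -ord_i hE e.
    rewrite big1 ?addn0 ?hE ?eqxx //.
    move=> h' /andP [_ nh]; apply/eqP; rewrite eqb0 -hE.
    by apply: contra nh => /eqP/inj ->; rewrite eqxx.
  rewrite big1 // => h' hin; rewrite inE in hin.
  apply/eqP; rewrite eqb0; apply: contra ne => /eqP <-.
  by rewrite ord_i.
rewrite exchange_big /= mulnC -sum_nat_const.
apply: eq_bigr => h _.
have [g0 g0E] := surj2 h.
rewrite -sum1_card.
rewrite (reindex (fun k => k * g0)) /=; last first.
  by exists (fun k => k * g0^-1) => k _; rewrite ?mulgKV ?mulgK.
rewrite big_mkcond [RHS]big_mkcond; apply: eq_bigr => k _.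
rewrite inE g0E expgMn; last exact: comm.
have -> : (g0 ^+ p == k ^+ p * g0 ^+ p) = (k ^+ p == 1).
  by rewrite -{1}(mul1g (g0 ^+ p)) (inj_eq (mulIg _)) eq_sym.
by case: (_ == _).
Qed.
Local Close Scope group_scope.
Local Open Scope ring_scope.
Lemma ceil_step (a p : nat) : (0 < p)%N -> ((a + p + p - 1) %/ p = (a + p - 1) %/ p + 1)%N.
Proof.
move=> hp.
have -> : (a + p + p - 1 = (a + p - 1) + 1 * p)%N.
  lia.
by rewrite divnDMl.
Qed.

Lemma ceil_small (a p : nat) : (0 < a)%N -> (a <= p)%N -> ((a + p - 1) %/ p = 1)%N.
Proof.
move=> ha hap.
have hp : (0 < p)%N by apply: leq_trans ha hap.
have -> : (a + p - 1 = (a - 1) + 1 * p)%N.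
  lia.
rewrite divnDMl // divn_small //.
lia.
Qed.

Lemma ceil0 (p : nat) : (0 < p)%N -> ((0 + p - 1) %/ p = 0)%N.
Proof. by move=> hp; rewrite divn_small //; lia. Qed.

Lemma val_frob (F : fieldType) (P : {poly F}) (p : nat) :
  irreducible_poly P -> (0 < p)%N ->
  forall a f, P ^+ a %| f ^+ p -> P ^+ ((a + p - 1) %/ p) %| f.
Proof.
move=> Pirr hp a; elim: a {-2}a (leqnn a) => [|N IH] a ha f H.
  by move: ha; rewrite leqn0 => /eqP ->; rewrite ceil0 // expr0 dvd1p.
case: a ha H => [|a0] ha H; first by rewrite ceil0 // expr0 dvd1p.
have P0 : P != 0 by apply: irredp_neq0.
have Pf : P %| f.
  have : P %| f ^+ p.
    by apply: dvdp_trans H; rewrite -{1}(expr1 P) dvdp_exp2l.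
  apply: contraLR; rewrite -!irreducible_poly_coprime // => cop.
  exact: coprimep_expr.
have [ap|pa] := leqP a0.+1 p.
  by rewrite ceil_small // expr1.
have [a' ea] : exists a', a0.+1 = (a' + p)%N by exists (a0.+1 - p)%N; rewrite subnK // ltnW.
rewrite ea ceil_step // addn1 exprS.
move: H; rewrite ea -(divpK Pf) exprMn exprD => H.
rewrite [f %/ P * P]mulrC dvdp_mul2l //; apply: (IH a').
  lia.
by move: H; rewrite dvdp_mul2r // expf_neq0.
Qed.

Lemma frob_val (F : fieldType) (P : {poly F}) (p a : nat) f :
  (a <= ((a + p - 1) %/ p) * p)%N ->
  P ^+ ((a + p - 1) %/ p) %| f -> P ^+ a %| f ^+ p.
Proof.
move=> hle H; apply: dvdp_trans (dvdp_exp2r p H).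
by rewrite -exprM dvdp_exp2l.
Qed.

Lemma ceil_ge (a p : nat) : (0 < p)%N -> (a <= ((a + p - 1) %/ p) * p)%N.
Proof.
move=> hp.
have h1 := divn_eq (a + p - 1) p; have h2 := ltn_pmod (a + p - 1) hp.
move: h1 h2; set q := ((a + p - 1) %/ p)%N; set r := ((a + p - 1) %% p)%N.
lia.
Qed.

Lemma ceil_le (a p : nat) : (0 < p)%N -> (0 < a)%N -> (0 < (a + p - 1) %/ p <= a)%N.
Proof.
move=> hp ha.
have h1 := divn_eq (a + p - 1) p; have h2 := ltn_pmod (a + p - 1) hp.
move: h1 h2; set q := ((a + p - 1) %/ p)%N; set r := ((a + p - 1) %% p)%N.
nia.
Qed.
Lemma frobB (R : comNzRingType) (p : nat) : p \in [pchar R] ->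
  forall x y : R, (x - y) ^+ p = x ^+ p - y ^+ p.
Proof. by move=> hp x y; rewrite -!(pFrobenius_autE hp) pFrobenius_autB_comm //; exact: mulrC. Qed.

Lemma frobD (R : comNzRingType) (p : nat) : p \in [pchar R] ->
  forall x y : R, (x + y) ^+ p = x ^+ p + y ^+ p.
Proof. by move=> hp x y; rewrite -!(pFrobenius_autE hp) pFrobenius_autD_comm //; exact: mulrC. Qed.

Lemma inqX (F : fieldType) (h u : {poly F}) n :
  in_qpoly h (u ^+ n) = (in_qpoly h u) ^+ n.
Proof. by elim: n => [|n IH]; rewrite ?expr0 ?in_qpoly1 // !exprS in_qpolyM IH. Qed.

Section Ring.
Variables (F : finFieldType) (P : {poly F}).
Hypothesis Pmon : P \is monic.
Hypothesis Pirr : irreducible_poly P.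

Local Notation d := (size P).-1.

Lemma sizeP_gt1 : (1 < size P)%N.
Proof. by case: Pirr. Qed.

Lemma size_Pexp b : size (P ^+ b) = (d * b).+1.
Proof.
rewrite -size_exp prednK // size_poly_gt0 expf_neq0 //; exact: irredp_neq0.
Qed.

Lemma mk_monicE b : (0 < b)%N -> mk_monic (P ^+ b) = P ^+ b.
Proof.
move=> hb; rewrite /mk_monic size_Pexp monic_exp // andbT.
have := sizeP_gt1; case: b hb => // b _ h; rewrite ltnS.
by rewrite muln_gt0 andbT; case: (size P) h => [|[]].
Qed.

Lemma inq_eq b : (0 < b)%N -> forall u v : {poly F},
  (in_qpoly (P ^+ b) u == in_qpoly (P ^+ b) v) = (P ^+ b %| u - v).
Proof.
move=> hb u v; rewrite -val_eqE /= -!Pdiv.IdomainMonic.modpE ?monic_mk_monic //.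
by rewrite mk_monicE // /dvdp modpD modpN subr_eq0.
Qed.

Lemma inq_val b (x : {poly %/ P ^+ b}) : in_qpoly (P ^+ b) (val x) = x.
Proof. by apply: val_inj; exact: (in_qpoly_small (size_mk_monic x)). Qed.

Lemma size_qb b : (0 < b)%N -> forall x : {poly %/ P ^+ b}, (size (val x) <= d * b)%N.
Proof.
move=> hb x.
have e : size (mk_monic (P ^+ b)) = (d * b).+1 by rewrite mk_monicE // size_Pexp.
apply: (@leq_trans (size (mk_monic (P ^+ b))).-1); last by rewrite e.
by rewrite -ltnS prednK ?size_mk_monic_gt0 //; exact: size_mk_monic.
Qed.

Lemma cop_mk b : (0 < b)%N -> forall u : {poly F},
  coprimep (mk_monic (P ^+ b)) u = coprimep P u.
Proof. by move=> hb u; rewrite mk_monicE // coprimep_pexpl. Qed.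

Lemma unitE b : (0 < b)%N -> forall x : {poly %/ P ^+ b},
  (x \is a GRing.unit) = coprimep P (val x).
Proof.
move=> hb x; have -> : (x \is a GRing.unit) = coprimep (mk_monic (P ^+ b)) (val x) by [].
by rewrite cop_mk.
Qed.

Lemma inq_unit b : (0 < b)%N -> forall u : {poly F},
  (in_qpoly (P ^+ b) u \is a GRing.unit) = coprimep P u.
Proof.
move=> hb u; rewrite unitE //= -Pdiv.IdomainMonic.modpE ?monic_mk_monic //.
rewrite mk_monicE // -(coprimep_pexpl _ _ hb) coprimep_modr.
by rewrite coprimep_pexpl.
Qed.


Section AD.
Variables (p alpha delta : nat).
Hypothesis pchar : p \in [pchar F].
Hypothesis hd : (0 < delta)%N.
Hypothesis hda : (delta <= alpha)%N.
Hypothesis hval : forall f : {poly F}, (P ^+ alpha %| f ^+ p) = (P ^+ delta %| f).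

Let ha : (0 < alpha)%N. Proof. exact: leq_trans hd hda. Qed.
Let pcharP : p \in [pchar {poly F}]. Proof. by rewrite pchar_poly. Qed.

Local Notation Aa := {poly %/ P ^+ alpha}.
Local Notation Ad := {poly %/ P ^+ delta}.

Definition phi (x : Ad) : Aa := in_qpoly (P ^+ alpha) (val x ^+ p).
Definition rho (y : Aa) : Ad := in_qpoly (P ^+ delta) (val y).

Lemma cong_a (u v : {poly F}) : P ^+ delta %| u - v ->
  in_qpoly (P ^+ alpha) (u ^+ p) = in_qpoly (P ^+ alpha) (v ^+ p).
Proof. by move=> h; apply/eqP; rewrite inq_eq // -frobB // hval. Qed.

Lemma val_mul b : (0 < b)%N -> forall x y : {poly %/ P ^+ b},
  P ^+ b %| val (x * y) - val x * val y.
Proof. by move=> hb x y; rewrite -(inq_eq _ hb) in_qpolyM !inq_val. Qed.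

Lemma val1 b : val (1 : {poly %/ P ^+ b}) = 1.
Proof. by []. Qed.

Lemma phiM x y : phi (x * y) = phi x * phi y.
Proof. by rewrite /phi -in_qpolyM -exprMn; apply: cong_a; exact: val_mul. Qed.

Lemma phi1 : phi 1 = 1.
Proof. by rewrite /phi val1 expr1n in_qpoly1. Qed.

Lemma phi_inj : injective phi.
Proof.
move=> x y /eqP; rewrite inq_eq // -frobB // hval -inq_eq // !inq_val.
by move/eqP.
Qed.

Lemma rhoM x y : rho (x * y) = rho x * rho y.
Proof.
rewrite /rho -in_qpolyM; apply/eqP; rewrite inq_eq //.
by apply: (dvdp_trans _ (val_mul _ ha x y)); exact: dvdp_exp2l.
Qed.

Lemma rho1 : rho 1 = 1.
Proof. by rewrite /rho val1 in_qpoly1. Qed.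

Lemma phi_rho y : phi (rho y) = y ^+ p.
Proof.
rewrite /phi -{2}(inq_val _ y) -inqX; apply: cong_a.
by rewrite -inq_eq // !inq_val.
Qed.

Lemma phi_lift h : phi h = (in_qpoly (P ^+ alpha) (val h)) ^+ p.
Proof. by rewrite /phi inqX. Qed.

Lemma phi_unit x : x \is a GRing.unit -> phi x \is a GRing.unit.
Proof. by move=> ux; apply/unitrPr; exists (phi x^-1); rewrite -phiM mulrV // phi1. Qed.

Lemma rho_unit x : x \is a GRing.unit -> rho x \is a GRing.unit.
Proof. by move=> ux; apply/unitrPr; exists (rho x^-1); rewrite -rhoM mulrV // rho1. Qed.

Lemma lift_unit (x : Ad) : x \is a GRing.unit ->
  in_qpoly (P ^+ alpha) (val x) \is a GRing.unit.
Proof. by move=> ux; rewrite inq_unit // -(unitE _ hd x). Qed.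

Definition iota (u : {unit Ad}) : {unit Aa} := FinRing.Unit (phi_unit _ (valP u)).


Lemma iota_morph : {morph iota : x y / (x * y)%g}.
Proof. by move=> x y; apply: val_inj => /=; exact: phiM. Qed.

Lemma iota_inj : injective iota.
Proof. by move=> x y /(congr1 val) /= /phi_inj /val_inj. Qed.

Lemma iota_surj1 (g : {unit Aa}) : exists h, iota h = (g ^+ p)%g.
Proof.
exists (FinRing.Unit (rho_unit _ (valP g))).
by apply: val_inj; rewrite /= phi_rho val_unitX.
Qed.

Lemma iota_surj2 (h : {unit Ad}) : exists g, iota h = (g ^+ p)%g.
Proof.
exists (FinRing.Unit (lift_unit _ (valP h))).
by apply: val_inj; rewrite /= phi_lift val_unitX.
Qed.

Lemma units_comm (x y : {unit Aa}) : commute x y.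
Proof. by apply: val_inj => /=; exact: mulrC. Qed.

Let pchA : p \in [pchar Aa]. Proof. by rewrite pchar_qpoly. Qed.
Let pprime : prime p. Proof. exact: pcharf_prime pchar. Qed.

Lemma cardK1 : #|[set g : {unit Aa} | (g ^+ p == 1)%g]| = #|[set a : Aa | a ^+ p == 0]|.
Proof.
pose f (g : {unit Aa}) : Aa := val g - 1.
have finj : injective f.
  by move=> x y /(congr1 (fun z => z + 1)); rewrite /f !subrK => /val_inj.
rewrite -(card_imset _ finj); apply: eq_card => a.
apply/imsetP/idP.
  move=> [g]; rewrite inE => /eqP gS ->.
  by rewrite inE /f frobB // -val_unitX gS val_unit1 expr1n subrr.
rewrite inE => /eqP ha0.
have u1 : (1 + a) \is a GRing.unit.
  apply/unitrPr; exists ((1 + a) ^+ p.-1).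
  by rewrite -exprS prednK ?prime_gt0 // frobD // expr1n ha0 addr0.
exists (FinRing.Unit u1); last by rewrite /f /= [1 + a]addrC addrK.
rewrite inE; apply/eqP/val_inj.
by rewrite val_unitX /= frobD // expr1n ha0 addr0.
Qed.

Lemma cardK2 : #|[set a : Aa | a ^+ p == 0]| = #|[set a : Aa | P ^+ delta %| val a]|.
Proof.
apply: eq_card => a; rewrite !inE.
by rewrite -{1}(inq_val _ a) -inqX -in_qpoly0 inq_eq // subr0 hval.
Qed.

Lemma cardK3 : #|[set a : Aa | P ^+ delta %| val a]| = (#|F| ^ (d * (alpha - delta)))%N.
Proof.
set k := (d * (alpha - delta))%N.
have P0 : P ^+ delta != 0 by rewrite expf_neq0 // irredp_neq0.
have hk : (d * delta + k = d * alpha)%N.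
  by rewrite /k -mulnDr subnKC.
pose m (h : {poly_k F}) : Aa := in_qpoly (P ^+ alpha) (P ^+ delta * val h).
have sm (h : {poly_k F}) : val (m h) = P ^+ delta * val h.
  apply: in_qpoly_small; rewrite mk_monicE // size_Pexp ltnS.
  have [->|h0] := eqVneq (val h) 0; first by rewrite mulr0 size_poly0.
  rewrite size_mul // size_Pexp addSn /= -hk leq_add2l.
  exact: size_npoly.
have minj : injective m.
  move=> x y /(congr1 val); rewrite !sm => /(mulfI P0) /val_inj //.
rewrite -[RHS]card_npoly -cardsT -(card_imset _ minj); apply: eq_card => a.
rewrite inE; apply/idP/imsetP.
  move=> Hdiv.
  have sz : (size (val a %/ P ^+ delta)%R <= k)%N.
    rewrite size_divp // size_Pexp /=.
    by rewrite leq_subLR hk; exact: size_qb.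
  exists (npolyp k (val a %/ P ^+ delta)); first by rewrite inE.
  have e : val (npolyp k (val a %/ P ^+ delta)) = val a %/ P ^+ delta := npolypK sz.
  by apply: val_inj; rewrite sm e divpKC.
by move=> [h _ ->]; rewrite sm dvdp_mulIl.
Qed.

End AD.
End Ring.

Theorem proposition5p5 (F : finFieldType) (p s : nat) (P : {poly F}) (n alpha : nat) :
  prime p -> #|F| = (p ^ s)%N ->
  P \is monic -> irreducible_poly P ->
  (2 <= n)%N -> (1 <= alpha)%N ->
  let q := #|F| in
  let d := (size P).-1 in
  let delta := ((alpha - 1) %/ p + 1)%N in
  let ceil_alpha_p := ((alpha + p - 1) %/ p)%N in
  ((ncyc_subgroups P p n alpha)%:R : rat)
    = (q ^ (d * (alpha - ceil_alpha_p)))%:R / p%:R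
        * (ncyc_subgroups P p n.-1 delta)%:R.
Proof.
move=> pr hF Pmon Pirr hn ha q d delta ceil.
have hp : (0 < p)%N by apply: prime_gt0.
have edelta : delta = ceil.
  rewrite /delta /ceil.
  have -> : (alpha + p - 1 = (alpha - 1) + 1 * p)%N by lia.
  by rewrite divnDMl // mul1n.
rewrite edelta.
have pch : p \in [pchar F] by exact: card_finPcharP hF pr.
have [hc1 hc2] := andP (@ceil_le alpha p hp ha).
have hval : forall f : {poly F}, (P ^+ alpha %| f ^+ p) = (P ^+ ceil %| f).
  move=> f; apply/idP/idP.
    exact: val_frob.
  by apply: frob_val; exact: ceil_ge.
set io := iota _ _ Pmon Pirr _ _ _ pch hc1 hc2 hval.
have cnt := count_pow _ _ _ _ _ pr hn (@units_comm F P alpha)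
  (iota_morph _ _ Pmon Pirr _ _ _ pch hc1 hc2 hval) (iota_inj _ _ Pmon Pirr _ _ _ pch hc1 hc2 hval)
  (iota_surj1 _ _ Pmon Pirr _ _ _ pch hc1 hc2 hval) (iota_surj2 _ _ Pmon Pirr _ _ _ pch hc1 hc2 hval).
rewrite (cardK1 _ _ _ _ pch) (cardK2 _ _ Pmon Pirr _ _ _ hc1 hc2 hval) (cardK3 _ _ Pmon Pirr _ _ hc1 hc2) in cnt.
rewrite !ncyc_card in cnt.
have eT : totient (p ^ n) = (p * totient (p ^ n.-1))%N.
  case: n hn {cnt} => [|[|n']] // _ /=.
  by rewrite !totient_pfactor //= mulnCA -expnS.
have T0 : (0 < totient (p ^ n.-1))%N by rewrite totient_gt0 expn_gt0 hp.
rewrite eT in cnt.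
rewrite /ncyc_subgroups.
move: cnt; rewrite !mulnA => /eqP;  rewrite eqn_pmul2r // => /eqP cnt.
rewrite -[ceil]/(ceil) /q /d.
apply: (mulIf (x := (p%:R : rat))); first by rewrite Num.Theory.pnatr_eq0 -lt0n.
rewrite -natrM cnt mulrAC divfK ?Num.Theory.pnatr_eq0 -?lt0n // -natrM.
by [].
Qed.
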